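(* Let $X$ be a complex Banach space and $\{S_h\},\{T_h\}\in C_b((0,1],B(X))$ with $\lim_{h\to0}\|T_hS_h-S_hT_h\|=0$. Then for every $\lambda\in r(\{T_h\})$ and every $\{R(\lambda,T_h)\}\in C_b((0,1],B(X))$ with $\lim_{h\to0}\|(\lambda I-T_h)R(\lambda,T_h)-I\|=\lim_{h\to0}\|R(\lambda,T_h)(\lambda I-T_h)-I\|=0$, we have $\lim_{h\to0}\|R(\lambda,T_h)S_h-S_hR(\lambda,T_h)\|=0$.
   Context: $B(X)$ is the algebra of bounded linear operators on $X$. $C_b((0,1],B(X))$ denotes the set of families $\{T_h\}_{h\in(0,1]}\subset B(X)$ with $\sup_{h}\|T_h\|<\infty$. The resolvent set of $\{T_h\}$ is $r(\{T_h\})=\{\lambda\in\mathbb{C}:\ \exists\{R(\lambda,T_h)\}\in C_b((0,1],B(X))$ with $\lim_{h\to0}\|(\lambda I-T_h)R(\lambda,T_h)-I\|=\lim_{h\to0}\|R(\lambda,T_h)(\lambda I-T_h)-I\|=0\}$. *)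

(* Defs.v *)
From HB Require Import structures.
From mathcomp Require Import all_boot all_order all_algebra.
From mathcomp Require Import complex.
From mathcomp Require Import all_classical all_reals all_analysis.
Set Implicit Arguments. Unset Strict Implicit. Unset Printing Implicit Defensive.
Import Order.TTheory GRing.Theory Num.Theory.
Import numFieldNormedType.Exports.
Local Open Scope classical_set_scope.
Local Open Scope ring_scope.

(* Complex Banach spaces: X : completeNormedModType (complex R) for R : realType.
   The norm `|x| of X takes values in complex R (with zero imaginary part);
   nrm x is its real part, i.e. the real number ||x||. *)
Section OperatorDefs.
Variable R : realType.
Variable X : normedModType (complex R).

Definition nrm (x : X) : R := complex.Re `|x|.

Definition bounded_op (A : X -> X) : Prop :=
  exists M : R, forall x : X, nrm (A x) <= M * nrm x.

Definition opnorm (A : X -> X) : R :=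
  sup [set nrm (A x) | x in [set x : X | nrm x <= 1]].

Definition idop : X -> X := fun x => x.
Definition compop (A B : X -> X) : X -> X := fun x => A (B x).
Definition subop (A B : X -> X) : X -> X := fun x => A x - B x.
Definition shiftop (l : complex R) (A : X -> X) : X -> X := fun x => l *: x - A x.

(* C_b((0,1], B(X)): families {T_h}_{h in (0,1]} of bounded linear operators
   with sup_h ||T_h|| < oo.  (Values at h outside (0,1] are irrelevant.) *)
Definition Cb (T : R -> {linear X -> X}) : Prop :=
  (forall h : R, 0 < h <= 1 -> bounded_op (T h)) /\
  exists M : R, forall h : R, 0 < h <= 1 -> opnorm (T h) <= M.

Definition opnorm_to0 (A : R -> X -> X) : Prop :=
  opnorm (A h) @[h --> 0^'+] --> (0 : R).

Definition approx_resolvent (T : R -> {linear X -> X}) (l : complex R)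
    (Rl : R -> {linear X -> X}) : Prop :=
  Cb Rl /\
  opnorm_to0 (fun h => subop (compop (shiftop l (T h)) (Rl h)) idop) /\
  opnorm_to0 (fun h => subop (compop (Rl h) (shiftop l (T h))) idop).

Definition resolvent_set (T : R -> {linear X -> X}) : set (complex R) :=
  [set l | exists Rl : R -> {linear X -> X}, approx_resolvent T l Rl].

End OperatorDefs.

(* Main.v *)
Require Import Defs.
From HB Require Import structures.
From mathcomp Require Import all_boot all_order all_algebra.
From mathcomp Require Import complex.
From mathcomp Require Import all_classical all_reals all_analysis.
From mathcomp Require Import lra.
Import Order.TTheory GRing.Theory Num.Theory.
Import numFieldNormedType.Exports.
Local Open Scope classical_set_scope.
Local Open Scope ring_scope.

Lemma zmE (V : zmodType) (a b p q L : V) : a - b = p - q + (- L + q + a) + (L - p - b).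
Proof.
rewrite addrACA (addrC (-L + q)) -!addrA.
rewrite (addrCA L) (addrCA (-q) (-p)) addNKr.
rewrite (addrCA L a) addNKr (addrCA (-q) a) addKr. by [].
Qed.

Section H.
Variable R : realType.
Variable X : normedModType (complex R).
Local Notation nrm := (@nrm R X).

Lemma Im_norm (x : X) : complex.Im `|x| = 0.
Proof. by apply: ger0_Im. Qed.

Lemma nrm_ge0 (x : X) : 0 <= nrm x.
Proof. have := normr_ge0 x; by rewrite lecE /= => /andP[_]. Qed.

Lemma nrm_normE (x : X) : `|x| = (nrm x)%:C%C.
Proof. rewrite /nrm; case E: `|x| => [a b] /=. by have := Im_norm x; rewrite E /= => ->. Qed.

Lemma nrmD (x y : X) : nrm (x + y) <= nrm x + nrm y.
Proof. have := ler_normD x y; rewrite !nrm_normE lecE /= => /andP[_]. done. Qed.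

Lemma nrmN (x : X) : nrm (- x) = nrm x.
Proof. by rewrite /nrm normrN. Qed.

Lemma nrmB (x y : X) : nrm (x - y) <= nrm x + nrm y.
Proof. by rewrite -(nrmN y) nrmD. Qed.



Lemma nrmZ (c : complex R) (x : X) : nrm (c *: x) = complex.Re `|c| * nrm x.
Proof.
rewrite /nrm normrZ nrm_normE; have : complex.Im `|c| = 0 by apply: ger0_Im.
case: `|c| => a b /= ->. by rewrite mul0r subr0.
Qed.

Lemma Re_norm_ge0 (c : complex R) : 0 <= complex.Re `|c|.
Proof. have := normr_ge0 c; by rewrite lecE /= => /andP[_]. Qed.

Lemma Re_normR (k : R) : 0 <= k -> complex.Re `|k%:C%C| = k.
Proof. by move=> k0; rewrite ger0_norm // ler0c. Qed.

Lemma nrm0 : nrm 0 = 0.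
Proof. by rewrite /nrm normr0. Qed.

Lemma nrm_eq0 (x : X) : nrm x = 0 -> x = 0.
Proof. move=> h; apply/normr0_eq0. by rewrite nrm_normE h. Qed.


Definition scal (A : X -> X) := forall (c : complex R) x, A (c *: x) = c *: A x.
Local Notation opn := (@opnorm R X).
Local Notation bop := (@bounded_op R X).
Local Notation OS A := [set nrm (A x) | x in [set x : X | nrm x <= 1]].

Lemma OS_ne (A : X -> X) : OS A !=set0.
Proof. exists (nrm (A 0)); exists 0 => //=. by rewrite nrm0. Qed.

Lemma OS_ub (A : X -> X) K : (forall x, nrm (A x) <= K * nrm x) ->
  ubound (OS A) `|K|.
Proof.
move=> hK _ [x /= Hx <-]. apply: (le_trans (hK x)).
have := nrm_ge0 x; have := ler_norm K; have := normr_ge0 K. nra.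
Qed.

Lemma op_le (A : X -> X) K : (forall x, nrm (A x) <= K * nrm x) -> 0 <= K ->
  opn A <= K.
Proof.
move=> hK K0; apply: ge_sup; first exact: OS_ne.
move=> _ [x /= Hx <-]; apply: (le_trans (hK x)).
have := nrm_ge0 x. nra.
Qed.

Lemma op_ge0 (A : X -> X) K : (forall x, nrm (A x) <= K * nrm x) -> 0 <= opn A.
Proof.
move=> hK; apply: le_trans (nrm_ge0 (A 0)) _.
apply: (ub_le_sup (E := OS A)); first by exists `|K|; apply: OS_ub hK.
by exists 0 => //=; rewrite nrm0.
Qed.

Lemma op_app (A : X -> X) : scal A -> bop A -> forall x, nrm (A x) <= opn A * nrm x.
Proof.
move=> sA [K hK] x.
have hs : has_ubound (OS A) by exists `|K|; apply: OS_ub hK.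
have [/nrm_eq0 ->|nx] := eqVneq (nrm x) 0.
  have -> : A 0 = 0 by have := sA 0 0; rewrite !scale0r.
  by rewrite nrm0 mulr0.
have npos : 0 < nrm x by rewrite lt_def nx nrm_ge0.
pose y := ((nrm x)^-1)%:C%C *: x.
have ny : nrm y = 1.
  by rewrite /y nrmZ Re_normR ?invr_ge0 ?nrm_ge0 // mulVf.
have : nrm (A y) <= opn A.
  apply: (ub_le_sup (E := OS A)) => //. exists y => //; by rewrite /mkset ny.
rewrite /y sA nrmZ Re_normR ?invr_ge0 ?nrm_ge0 //.
rewrite ler_pdivrMl //. by rewrite mulrC.
Qed.


Lemma scal_lin (f : {linear X -> X}) : scal f.
Proof. by move=> c x; rewrite linearZ. Qed.

Lemma scal_comp A B : scal A -> scal B -> scal (compop A B).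
Proof. by move=> sA sB c x; rewrite /compop sB sA. Qed.

Lemma scal_sub A B : scal A -> scal B -> scal (subop A B).
Proof. by move=> sA sB c x; rewrite /subop sA sB scalerBr. Qed.

Lemma scal_id : scal (@idop R X).
Proof. by []. Qed.

Lemma scal_shift l A : scal A -> scal (shiftop l A).
Proof. by move=> sA c x; rewrite /shiftop sA scalerBr !scalerA mulrC. Qed.

Lemma opb A : scal A -> bop A -> 0 <= opn A /\ forall x, nrm (A x) <= opn A * nrm x.
Proof. move=> sA bA; split; last exact: op_app. by case: bA => K; apply: op_ge0. Qed.

Lemma bnd_comp A B : scal A -> scal B -> bop A -> bop B -> bop (compop A B).
Proof.
move=> sA sB /(opb _ sA) [a0 ha] /(opb _ sB) [b0 hb]; exists (opn A * opn B) => x.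
rewrite /compop -mulrA; apply: le_trans (ha _) _; exact: ler_wpM2l.
Qed.

Lemma bnd_sub A B : bop A -> bop B -> bop (subop A B).
Proof.
move=> [a ha] [b hb]; exists (a + b) => x.
rewrite /subop mulrDl; apply: le_trans (nrmB _ _) _; exact: lerD.
Qed.

Lemma bnd_id : bop (@idop R X).
Proof. by exists 1 => x; rewrite mul1r. Qed.

Lemma bnd_shift l A : bop A -> bop (shiftop l A).
Proof.
move=> [a ha]; exists (complex.Re `|l| + a) => x.
rewrite /shiftop mulrDl; apply: le_trans (nrmB _ _) _; rewrite nrmZ; exact: lerD.
Qed.

Lemma le3 (a b c a' b' c' : R) : 0 <= a <= a' -> 0 <= b <= b' -> 0 <= c <= c' ->
  a * b * c <= a' * b' * c'.
Proof.
move=> /andP[a0 aa] /andP[b0 bb] /andP[c0 cc].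
apply: ler_pM => //; first exact: mulr_ge0.
exact: ler_pM.
Qed.

Lemma nrm3 A B C x : scal A -> scal B -> scal C -> bop A -> bop B -> bop C ->
  nrm (A (B (C x))) <= opn A * opn B * opn C * nrm x.
Proof.
move=> sA sB sC /(opb _ sA)[a0 ha] /(opb _ sB)[b0 hb] /(opb _ sC)[c0 hc].
apply: le_trans (ha _) _; rewrite -!mulrA; apply: ler_wpM2l => //.
apply: le_trans (hb _) _; exact: ler_wpM2l.
Qed.

Lemma ident (Rl S T : {linear X -> X}) l x :
  subop (compop Rl S) (compop S Rl) x =
  Rl (subop (compop T S) (compop S T) (Rl x))
  - Rl (S (subop (compop (shiftop l T) Rl) (@idop R X) x))
  + subop (compop Rl (shiftop l T)) (@idop R X) (S (Rl x)).
Proof.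
rewrite /subop /compop /shiftop /idop !linearB !linearZ /=.
rewrite scalerN !opprK; exact: zmE.
Qed.

Lemma in01 : (0 < (1:R)) && ((1:R) <= 1).
Proof. by rewrite ltr01 lexx. Qed.

Lemma main (S T : R -> {linear X -> X}) :
  Cb S -> Cb T ->
  opnorm_to0 (fun h => subop (compop (T h) (S h)) (compop (S h) (T h))) ->
  forall l : complex R, l \in resolvent_set T ->
  forall Rl : R -> {linear X -> X}, approx_resolvent T l Rl ->
  opnorm_to0 (fun h => subop (compop (Rl h) (S h)) (compop (S h) (Rl h))).
Proof.
move=> [bS [MS hMS]] [bT [MT hMT]] hC l _ Rl [[bR [MR hMR]] [h1 h2]].
have i01 := in01.
have MR0 : 0 <= MR.
  have [Hz _] := opb _ (scal_lin (Rl 1)) (bR 1 i01). exact: (le_trans Hz (hMR 1 i01)).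
have MS0 : 0 <= MS.
  have [Hz _] := opb _ (scal_lin (S 1)) (bS 1 i01). exact: (le_trans Hz (hMS 1 i01)).
pose c h := opnorm (subop (compop (T h) (S h)) (compop (S h) (T h))).
pose e1 h := opnorm (subop (compop (shiftop l (T h)) (Rl h)) (@idop R X)).
pose e2 h := opnorm (subop (compop (Rl h) (shiftop l (T h))) (@idop R X)).
have Kc : (fun h => MR * c h * MR + MR * MS * e1 h + e2 h * MS * MR) @ 0^'+ --> (0:R).
  have : (fun h => MR * c h * MR + MR * MS * e1 h + e2 h * MS * MR) @ 0^'+ -->
     MR * 0 * MR + MR * MS * 0 + 0 * MS * MR.
    apply: cvgD; first apply: cvgD.
    - by apply: cvgMr_tmp; apply: cvgMl_tmp; exact: hC.
    - by apply: cvgMl_tmp; exact: h1.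
    - by apply: cvgMr_tmp; apply: cvgMr_tmp; exact: h2.
  by rewrite !(mulr0, mul0r, addr0).
apply: (squeeze_cvgr _ (cvg_cst 0) Kc).
near=> h.
have hh : 0 < h <= 1.
  apply/andP; split.
    by near: h; exact: nbhs_right_gt.
  by near: h; apply: nbhs_right_le; exact: ltr01.
have sR := scal_lin (Rl h); have sS := scal_lin (S h); have sT := scal_lin (T h).
have bRh := bR h hh; have bSh := bS h hh; have bTh := bT h hh.
set C := subop (compop (T h) (S h)) (compop (S h) (T h)).
set E1 := subop (compop (shiftop l (T h)) (Rl h)) (@idop R X).
set E2 := subop (compop (Rl h) (shiftop l (T h))) (@idop R X).
have sC : scal C by apply: scal_sub; apply: scal_comp.
have sE1 : scal E1 by apply: scal_sub; [apply: scal_comp => //; apply: scal_shift|exact: scal_id].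
have sE2 : scal E2 by apply: scal_sub; [apply: scal_comp => //; apply: scal_shift|exact: scal_id].
have bC : bop C by apply: bnd_sub; apply: bnd_comp.
have bE1 : bop E1 by apply: bnd_sub; [apply: bnd_comp => //; [apply: scal_shift|apply: bnd_shift]|exact: bnd_id].
have bE2 : bop E2 by apply: bnd_sub; [apply: bnd_comp => //; [apply: scal_shift|apply: bnd_shift]|exact: bnd_id].
have [C0 _] := opb _ sC bC.
have [E10 _] := opb _ sE1 bE1.
have [E20 _] := opb _ sE2 bE2.
have [R0 _] := opb _ sR bRh.
have [S0 _] := opb _ sS bSh.
have hR := hMR h hh; have hS := hMS h hh.
pose K := opn (Rl h) * opn C * opn (Rl h) + opn (Rl h) * opn (S h) * opn E1
  + opn E2 * opn (S h) * opn (Rl h).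
have K0 : 0 <= K.
  by rewrite /K; do 2?apply: addr_ge0; do 2?apply: mulr_ge0.
have hD : forall x, nrm (subop (compop (Rl h) (S h)) (compop (S h) (Rl h)) x) <= K * nrm x.
  move=> x; rewrite (ident (Rl h) (S h) (T h) l x) -/C -/E1 -/E2.
  apply: le_trans (nrmD _ _) _; rewrite /K !mulrDl.
  have n1 := nrm3 _ _ _ x sR sC sR bRh bC bRh.
  have n2 := nrm3 _ _ _ x sR sS sE1 bRh bSh bE1.
  have n3 := nrm3 _ _ _ x sE2 sS sR bE2 bSh bRh.
  have n4 := nrmB (Rl h (C (Rl h x))) (Rl h (S h (E1 x))).
  lra.
apply/andP; split; first exact: op_ge0 hD.
apply: le_trans (op_le _ _ hD K0) _.
rewrite /K; apply: lerD; first apply: lerD.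
- by apply: le3; rewrite ?R0 ?C0 ?hR ?lexx.
- by apply: le3; rewrite ?R0 ?S0 ?E10 ?hR ?hS ?lexx.
- by apply: le3; rewrite ?R0 ?S0 ?E20 ?hR ?hS ?lexx.
Unshelve. all: end_near.
Qed.
End H.

Theorem proposition24 (R : realType) (X : completeNormedModType (complex R))
    (S T : R -> {linear X -> X}) :
  Cb S -> Cb T ->
  opnorm_to0 (fun h => subop (compop (T h) (S h)) (compop (S h) (T h))) ->
  forall l : complex R, l \in resolvent_set T ->
  forall Rl : R -> {linear X -> X}, approx_resolvent T l Rl ->
  opnorm_to0 (fun h => subop (compop (Rl h) (S h)) (compop (S h) (Rl h))).
Proof. exact: main. Qed.
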